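(* Let $\mathcal{Q}$ be a small involutive quantaloid and $\Psi\colon\mathbb{A}\to\mathbb{B}$ a left adjoint distributor between $\mathcal{Q}$-categories, with right adjoint $\Psi^*$. Let $\Psi_{\mathsf s}\colon\mathbb{A}_{\mathsf s}\to\mathbb{B}_{\mathsf s}$ be the distributor $\Psi_{\mathsf s}=(\mathbb{B}(S_{\mathbb{B}}-,-)\otimes\Psi\otimes\mathbb{A}(-,S_{\mathbb{A}}-))\wedge(\mathbb{A}(S_{\mathbb{A}}-,-)\otimes\Psi^*\otimes\mathbb{B}(-,S_{\mathbb{B}}-))^{\mathsf o}$, i.e. $\Psi_{\mathsf s}(b,a)=\Psi(b,a)\wedge\Psi^*(a,b)^{\mathsf o}$. Then $\Psi_{\mathsf s}\otimes(\Psi_{\mathsf s})^{\mathsf o}\le\mathbb{B}_{\mathsf s}$. Consequently $\Psi_{\mathsf s}$ is a symmetric left adjoint if and only if $\mathbb{A}_{\mathsf s}\le(\Psi_{\mathsf s})^{\mathsf o}\otimes\Psi_{\mathsf s}$; and if this holds, then $\Psi=\mathbb{B}(-,S_{\mathbb{B}}-)\otimes\Psi_{\mathsf s}\otimes\mathbb{A}(S_{\mathbb{A}}-,-)$, i.e. $\Psi(b,a)=\bigvee_{a'\in\mathbb{A}_0,b'\in\mathbb{B}_0}\mathbb{B}(b,b')\circ\Psi_{\mathsf s}(b',a')\circ\mathbb{A}(a',a)$ for all $a,b$.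
   Context: A quantaloid is a category enriched in $\mathsf{Sup}$; an involution is an identity-on-objects, direction-reversing, monotone map $f\mapsto f^{\mathsf o}$ on morphisms with $(g\circ f)^{\mathsf o}=f^{\mathsf o}\circ g^{\mathsf o}$, $f^{\mathsf{oo}}=f$. A $\mathcal{Q}$-category $\mathbb{A}$: objects with types $tx$, homs $\mathbb{A}(y,x)\colon tx\to ty$ with $\mathbb{A}(z,y)\circ\mathbb{A}(y,x)\le\mathbb{A}(z,x)$, $1_{tx}\le\mathbb{A}(x,x)$; symmetric if $\mathbb{A}(x,y)=\mathbb{A}(y,x)^{\mathsf o}$. Symmetrisation $\mathbb{A}_{\mathsf s}$: same objects and types, $\mathbb{A}_{\mathsf s}(y,x)=\mathbb{A}(y,x)\wedge\mathbb{A}(x,y)^{\mathsf o}$ (symmetric); $S_{\mathbb{A}}\colon\mathbb{A}_{\mathsf s}\to\mathbb{A}$ is the identity on objects. Distributors $\Phi\colon\mathbb{A}\to\mathbb{B}$: arrows $\Phi(y,x)\colon tx\to ty$ with $\mathbb{B}(y',y)\circ\Phi(y,x)\le\Phi(y',x)$, $\Phi(y,x)\circ\mathbb{A}(x,x')\le\Phi(y,x')$; composition $(\Psi\otimes\Phi)(z,x)=\bigvee_y\Psi(z,y)\circ\Phi(y,x)$, identities the hom-families, elementwise order and infima. $\Phi$ is a left adjoint with right adjoint $\Phi^*$ if $\mathbb{A}\le\Phi^*\otimes\Phi$ and $\Phi\otimes\Phi^*\le\mathbb{B}$. $\mathbb{A}(-,S_{\mathbb{A}}-)\colon\mathbb{A}_{\mathsf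 s}\to\mathbb{A}$ and $\mathbb{A}(S_{\mathbb{A}}-,-)\colon\mathbb{A}\to\mathbb{A}_{\mathsf s}$ both have elements $\mathbb{A}(y,x)$. For a distributor $\Phi$ between symmetric $\mathcal{Q}$-categories, $\Phi^{\mathsf o}(x,y)=\Phi(y,x)^{\mathsf o}$, and $\Phi$ is a symmetric left adjoint if it is left adjoint to $\Phi^{\mathsf o}$. *)

(* Defs.v *)
Set Implicit Arguments.
Unset Strict Implicit.

Record InvQuantaloid := {
  qob : Type;
  qhom : qob -> qob -> Type;                 (* qhom X Y = arrows X -> Y *)
  qle : forall X Y, qhom X Y -> qhom X Y -> Prop;
  qsup : forall X Y, (qhom X Y -> Prop) -> qhom X Y;
  qcomp : forall X Y Z, qhom Y Z -> qhom X Y -> qhom X Z;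
  qid : forall X, qhom X X;
  qinv : forall X Y, qhom X Y -> qhom Y X;
  qle_refl : forall X Y (f : qhom X Y), qle f f;
  qle_trans : forall X Y (f g h : qhom X Y), qle f g -> qle g h -> qle f h;
  qle_antisym : forall X Y (f g : qhom X Y), qle f g -> qle g f -> f = g;
  qsup_ub : forall X Y (S : qhom X Y -> Prop) f, S f -> qle f (qsup S);
  qsup_least : forall X Y (S : qhom X Y -> Prop) g,
      (forall f, S f -> qle f g) -> qle (qsup S) g;
  qcomp_assoc : forall X Y Z W (h : qhom Z W) (g : qhom Y Z) (f : qhom X Y),
      qcomp h (qcomp g f) = qcomp (qcomp h g) f;
  qcomp_id_l : forall X Y (f : qhom X Y), qcomp (qid Y) f = f;
  qcomp_id_r : forall X Y (f : qhom X Y), qcomp f (qid X) = f;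
  qcomp_sup_l : forall X Y Z (g : qhom Y Z) (S : qhom X Y -> Prop),
      qcomp g (qsup S) = qsup (fun h => exists f, S f /\ h = qcomp g f);
  qcomp_sup_r : forall X Y Z (S : qhom Y Z -> Prop) (f : qhom X Y),
      qcomp (qsup S) f = qsup (fun h => exists g, S g /\ h = qcomp g f);
  qinv_mono : forall X Y (f g : qhom X Y), qle f g -> qle (qinv f) (qinv g);
  qinv_comp : forall X Y Z (g : qhom Y Z) (f : qhom X Y),
      qinv (qcomp g f) = qcomp (qinv f) (qinv g);
  qinv_inv : forall X Y (f : qhom X Y), qinv (qinv f) = f
}.

Arguments qhom : clear implicits.
Arguments qle {_ X Y} f g.
Arguments qsup {_ X Y} S.
Arguments qcomp {_ X Y Z} g f.
Arguments qid {_} X.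
Arguments qinv {_ X Y} f.

Definition qmeet (Q : InvQuantaloid) X Y (f g : qhom Q X Y) : qhom Q X Y :=
  qsup (fun h => qle h f /\ qle h g).
Arguments qmeet {Q X Y} f g.

Record QCat (Q : InvQuantaloid) := {
  cobj : Type;
  ctype : cobj -> qob Q;
  chom : forall (y x : cobj), qhom Q (ctype x) (ctype y);
  chom_comp : forall z y x, qle (qcomp (chom z y) (chom y x)) (chom z x);
  chom_id : forall x, qle (qid (ctype x)) (chom x x)
}.
Arguments ctype {Q} _ _.
Arguments chom {Q} _ y x.

(* Matrices of arrows: families Phi(y,x) : tx -> ty, indexed by objects of
   (the object sets of) a domain and codomain.  Distributors are matrices
   satisfying is_dist. *)
Definition mat (Q : InvQuantaloid) (X Y : Type) (tX : X -> qob Q) (tY : Y -> qob Q) :=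
  forall (y : Y) (x : X), qhom Q (tX x) (tY y).

Section Mat.
Context {Q : InvQuantaloid}.

Definition mcomp {X Y Z : Type} {tX : X -> qob Q} {tY : Y -> qob Q} {tZ : Z -> qob Q}
  (Psi : mat tY tZ) (Phi : mat tX tY) : mat tX tZ :=
  fun z x => qsup (fun h => exists y, h = qcomp (Psi z y) (Phi y x)).

Definition mle {X Y : Type} {tX : X -> qob Q} {tY : Y -> qob Q}
  (Phi Phi' : mat tX tY) : Prop := forall y x, qle (Phi y x) (Phi' y x).

Definition mmeet {X Y : Type} {tX : X -> qob Q} {tY : Y -> qob Q}
  (Phi Phi' : mat tX tY) : mat tX tY := fun y x => qmeet (Phi y x) (Phi' y x).

Definition mop {X Y : Type} {tX : X -> qob Q} {tY : Y -> qob Q}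
  (Phi : mat tX tY) : mat tY tX := fun x y => qinv (Phi y x).

Definition is_dist {X Y : Type} {tX : X -> qob Q} {tY : Y -> qob Q}
  (hX : mat tX tX) (hY : mat tY tY) (Phi : mat tX tY) : Prop :=
  (forall y' y x, qle (qcomp (hY y' y) (Phi y x)) (Phi y' x)) /\
  (forall y x x', qle (qcomp (Phi y x) (hX x x')) (Phi y x')).

Definition left_adjoint {X Y : Type} {tX : X -> qob Q} {tY : Y -> qob Q}
  (hX : mat tX tX) (hY : mat tY tY) (Phi : mat tX tY) (Phis : mat tY tX) : Prop :=
  is_dist hX hY Phi /\ is_dist hY hX Phis /\
  mle hX (mcomp Phis Phi) /\ mle (mcomp Phi Phis) hY.

Definition sym_left_adjoint {X Y : Type} {tX : X -> qob Q} {tY : Y -> qob Q}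
  (hX : mat tX tX) (hY : mat tY tY) (Phi : mat tX tY) : Prop :=
  left_adjoint hX hY Phi (mop Phi).

End Mat.

Definition hom {Q} (A : QCat Q) : mat (ctype A) (ctype A) := chom A.
Arguments hom {Q} A y x.

(* The hom family of the symmetrisation A_s: A_s(y,x) = A(y,x) /\ A(x,y)^o
   (same objects and types as A). *)
Definition symhom {Q} (A : QCat Q) : mat (ctype A) (ctype A) :=
  fun y x => qmeet (chom A y x) (qinv (chom A x y)).
Arguments symhom {Q} A y x.

(* The distributors A(-,S_A -) : A_s -> A and A(S_A -,-) : A -> A_s both have
   elements A(y,x), i.e. they are the matrix [hom A]. *)

Definition psi_s {Q} (A B : QCat Q) (Psi : mat (ctype A) (ctype B))
  (Psis : mat (ctype B) (ctype A)) : mat (ctype A) (ctype B) :=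
  mmeet (mcomp (mcomp (hom B) Psi) (hom A))
        (mop (mcomp (mcomp (hom A) Psis) (hom B))).
Arguments psi_s {Q} A B Psi Psis y x.

(* Main.v *)
Require Import Defs.
From Stdlib Require Import Setoid.

Section H.
Variable Q : InvQuantaloid.

Lemma comp_mono_r X Y Z (g : qhom Q Y Z) (f f' : qhom Q X Y) :
  qle f f' -> qle (qcomp g f) (qcomp g f').
Proof.
  intros Hf.
  assert (E : qsup (fun h => h = f \/ h = f') = f').
  { apply qle_antisym.
    - apply qsup_least. intros h [-> | ->]; [exact Hf | apply qle_refl].
    - apply qsup_ub. right; reflexivity. }
  rewrite <- E. rewrite qcomp_sup_l. apply qsup_ub. exists f. split; auto.
Qed.

Lemma comp_mono_l X Y Z (g g' : qhom Q Y Z) (f : qhom Q X Y) :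
  qle g g' -> qle (qcomp g f) (qcomp g' f).
Proof.
  intros Hg.
  assert (E : qsup (fun h => h = g \/ h = g') = g').
  { apply qle_antisym.
    - apply qsup_least. intros h [-> | ->]; [exact Hg | apply qle_refl].
    - apply qsup_ub. right; reflexivity. }
  rewrite <- E. rewrite qcomp_sup_r. apply qsup_ub. exists g. split; auto.
Qed.

Lemma comp_mono X Y Z (g g' : qhom Q Y Z) (f f' : qhom Q X Y) :
  qle g g' -> qle f f' -> qle (qcomp g f) (qcomp g' f').
Proof.
  intros. eapply qle_trans. apply comp_mono_l; eauto. apply comp_mono_r; auto.
Qed.

Lemma sup_comp_le_r X Y Z (S : qhom Q Y Z -> Prop) (f : qhom Q X Y) h :
  (forall s, S s -> qle (qcomp s f) h) -> qle (qcomp (qsup S) f) h.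
Proof.
  intros Hs. rewrite qcomp_sup_r. apply qsup_least. intros x [g [Sg ->]]. auto.
Qed.

Lemma meet_l X Y (f g : qhom Q X Y) : qle (qmeet f g) f.
Proof. apply qsup_least. intros h [H1 _]; auto. Qed.
Lemma meet_r X Y (f g : qhom Q X Y) : qle (qmeet f g) g.
Proof. apply qsup_least. intros h [_ H2]; auto. Qed.
Lemma meet_glb X Y (f g h : qhom Q X Y) : qle h f -> qle h g -> qle h (qmeet f g).
Proof. intros. apply qsup_ub. auto. Qed.

Lemma inv_le X Y (x : qhom Q X Y) y : qle (qinv x) y -> qle x (qinv y).
Proof. intros H. rewrite <- (qinv_inv x). apply qinv_mono. auto. Qed.
Lemma inv_le' X Y (x : qhom Q X Y) y : qle x (qinv y) -> qle (qinv x) y.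
Proof. intros H. rewrite <- (qinv_inv y). apply qinv_mono. auto. Qed.

Lemma qinv_id X : qinv (qid X) = qid X :> qhom Q X X.
Proof.
  transitivity (qcomp (qinv (qid X)) (qid X)); [symmetry; apply qcomp_id_r|].
  rewrite <- (qinv_inv (qid X)) at 2. rewrite <- qinv_comp.
  rewrite qcomp_id_r. apply qinv_inv.
Qed.

Lemma mcomp3_dist {X Y : Type} {tX : X -> qob Q} {tY : Y -> qob Q}
  (hX : mat tX tX) (hY : mat tY tY) (Phi : mat tX tY) :
  is_dist hX hY Phi -> (forall x, qle (qid _) (hX x x)) ->
  (forall y, qle (qid _) (hY y y)) ->
  forall y x, mcomp (mcomp hY Phi) hX y x = Phi y x.
Proof.
  intros [D1 D2] IX IY y x. apply qle_antisym.
  - unfold mcomp. apply qsup_least. intros h [x' ->]. apply sup_comp_le_r.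
    intros s [y' ->]. eapply qle_trans. apply comp_mono_l. apply D1. apply D2.
  - apply qle_trans with (qcomp (Phi y x) (qid _)).
    { rewrite qcomp_id_r. apply qle_refl. }
    unfold mcomp. eapply qle_trans; [| apply qsup_ub; exists x; reflexivity].
    apply comp_mono; [|apply IX].
    eapply qle_trans; [| apply qsup_ub; exists y; reflexivity].
    rewrite <- (qcomp_id_l (Phi y x)) at 1. apply comp_mono_l. apply IY.
Qed.

End H.

Theorem lemma3p5 (Q : InvQuantaloid) (A B : QCat Q)
  (Psi : mat (ctype A) (ctype B)) (Psis : mat (ctype B) (ctype A)) :
  left_adjoint (hom A) (hom B) Psi Psis ->
  mle (mcomp (psi_s A B Psi Psis) (mop (psi_s A B Psi Psis))) (symhom B) /\
  (sym_left_adjoint (symhom A) (symhom B) (psi_s A B Psi Psis) <->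
   mle (symhom A) (mcomp (mop (psi_s A B Psi Psis)) (psi_s A B Psi Psis))) /\
  (mle (symhom A) (mcomp (mop (psi_s A B Psi Psis)) (psi_s A B Psi Psis)) ->
   forall (b : cobj B) (a : cobj A),
     Psi b a = mcomp (mcomp (hom B) (psi_s A B Psi Psis)) (hom A) b a).
Proof.
  intros [DPsi [DPsis [Unit Counit]]].
  pose proof DPsi as [D1 D2]. pose proof DPsis as [E1 E2].
  unfold hom in *.
  assert (PsE : forall b a, psi_s A B Psi Psis b a = qmeet (Psi b a) (qinv (Psis a b))).
  { intros b a. unfold psi_s, mmeet, mop.
    rewrite (mcomp3_dist _ _ _ _ DPsi), (mcomp3_dist _ _ _ _ DPsis); auto; intros; apply chom_id. }
  set (Ps := psi_s A B Psi Psis) in *.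
  assert (K1 : forall b a, qle (Ps b a) (Psi b a)).
  { intros; rewrite PsE; apply meet_l. }
  assert (K2 : forall b a, qle (qinv (Ps b a)) (Psis a b)).
  { intros; rewrite PsE; apply inv_le'; apply meet_r. }
  assert (K3 : forall b a h, qle h (Psi b a) -> qle (qinv h) (Psis a b) -> qle h (Ps b a)).
  { intros; rewrite PsE; apply meet_glb; auto; apply inv_le; auto. }
  assert (L : forall b b' a, qle (qcomp (Ps b a) (qinv (Ps b' a))) (chom B b b')).
  { intros b b' a. apply qle_trans with (qcomp (Psi b a) (Psis a b')).
    apply comp_mono; auto.
    eapply qle_trans; [| apply Counit]. unfold mcomp. apply qsup_ub. exists a; reflexivity. }
  assert (symflipA : forall x y, qle (qinv (symhom A x y)) (symhom A y x)).
  { intros x y. unfold symhom. apply meet_glb.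
    - apply inv_le'. apply meet_r.
    - apply qinv_mono. apply meet_l. }
  assert (symflipB : forall x y, qle (qinv (symhom B x y)) (symhom B y x)).
  { intros x y. unfold symhom. apply meet_glb.
    - apply inv_le'. apply meet_r.
    - apply qinv_mono. apply meet_l. }
  assert (P1 : mle (mcomp Ps (mop Ps)) (symhom B)).
  { intros b b'. unfold mcomp, mop. apply qsup_least. intros h [a ->].
    unfold symhom. apply meet_glb.
    - apply L.
    - apply inv_le. rewrite qinv_comp, qinv_inv. apply L. }
  assert (Da : forall b' b a, qle (qcomp (symhom B b' b) (Ps b a)) (Ps b' a)).
  { intros b' b a. apply K3.
    - eapply qle_trans; [| apply (D1 b' b a)]. apply comp_mono; [apply meet_l | auto].
    - rewrite qinv_comp. eapply qle_trans; [| apply (E2 a b b')].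
      apply comp_mono; auto. apply inv_le'. apply meet_r. }
  assert (Db : forall b a a', qle (qcomp (Ps b a) (symhom A a a')) (Ps b a')).
  { intros b a a'. apply K3.
    - eapply qle_trans; [| apply (D2 b a a')]. apply comp_mono; [auto | apply meet_l].
    - rewrite qinv_comp. eapply qle_trans; [| apply (E1 a' a b)].
      apply comp_mono; auto. apply inv_le'. apply meet_r. }
  split; [exact P1|]. split.
  - split.
    + intros [_ [_ [H _]]]; exact H.
    + intros H. split; [split; assumption|]. split; [split|].
      * intros a' a b. unfold mop. apply inv_le. rewrite qinv_comp, qinv_inv.
        eapply qle_trans; [| apply (Db b a a')]. apply comp_mono_r. apply symflipA.
      * intros a b b'. unfold mop. apply inv_le. rewrite qinv_comp, qinv_inv.
        eapply qle_trans; [| apply (Da b' b a)]. apply comp_mono_l. apply symflipB.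
      * split; assumption.
  - intros H b a. apply qle_antisym.
    + apply qle_trans with (qcomp (Psi b a) (qid _)).
      { rewrite qcomp_id_r. apply qle_refl. }
      apply qle_trans with (qcomp (Psi b a) (symhom A a a)).
      { apply comp_mono_r. unfold symhom. apply meet_glb.
        - apply chom_id.
        - apply inv_le. rewrite qinv_id. apply chom_id. }
      apply qle_trans with (qcomp (Psi b a) (mcomp (mop Ps) Ps a a)).
      { apply comp_mono_r. apply H. }
      unfold mcomp at 1. rewrite qcomp_sup_l. apply qsup_least.
      intros h [f [[b' ->] ->]]. unfold mop. rewrite qcomp_assoc.
      apply qle_trans with (qcomp (chom B b b') (Ps b' a)).
      { apply comp_mono_l. eapply qle_trans; [| apply Counit].
        eapply qle_trans; [apply comp_mono_r; apply K2|].
        unfold mcomp. apply qsup_ub. exists a; reflexivity. }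
      unfold mcomp. eapply qle_trans; [| apply qsup_ub; exists a; reflexivity].
      apply qle_trans with (qcomp (qcomp (chom B b b') (Ps b' a)) (qid _)).
      { rewrite qcomp_id_r. apply qle_refl. }
      apply comp_mono; [| apply chom_id].
      apply qsup_ub. exists b'; reflexivity.
    + unfold mcomp. apply qsup_least. intros h [a' ->]. apply sup_comp_le_r.
      intros s [b' ->].
      apply qle_trans with (qcomp (qcomp (chom B b b') (Psi b' a')) (chom A a' a)).
      { apply comp_mono_l. apply comp_mono_r. auto. }
      eapply qle_trans; [apply comp_mono_l; apply D1|]. apply D2.
Qed.
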